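(* Let $\mathbf{A}$ be a finite ordered metric space and $p$ a partial isomorphism of $\mathbf{A}$. Let $\mathbf{B}$ be a finite metric space containing $\mathbf{A}$ as a metric subspace, and let $q$ be a partial isometry of $\mathbf{B}$ extending $p$ with $\mathrm{Per}(q)=\mathrm{Fix}(q)$. Suppose that for all $x\in\mathrm{dom}(q)$: $q(x)\in\mathbf{A}$ if and only if $x\in\mathrm{dom}(p)$. Then there is a linear order on $\mathbf{B}$ extending the order of $\mathbf{A}$ such that $q$ is a partial isomorphism of the resulting ordered metric space $\mathbf{B}$.
   Context: An ordered metric space is a triple $(A,d,<)$ with $d$ a metric on $A$ and $<$ a linear order on $A$. A partial isometry of a metric space is an isometry between finite subsets of it; a partial isomorphism of an ordered metric space is a partial isometry that also preserves the order on its domain. $\mathrm{Fix}(q)=\{x\in\mathrm{dom}(q):q(x)=x\}$; $x\in\mathrm{dom}(q)$ is periodic if there is $n>0$ with $x,q(x),\dots,q^n(x)$ all defined and $q^n(x)=x$, and $\mathrm{Per}(q)$ is the set of periodic points. *)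

(* Defs.v *)
From mathcomp Require Import all_boot.
From Stdlib Require Import Reals.
Set Implicit Arguments. Unset Strict Implicit. Unset Printing Implicit Defensive.

Local Open Scope R_scope.

Definition is_metric (X : Type) (d : X -> X -> R) : Prop :=
  (forall x y, 0 <= d x y) /\
  (forall x y, d x y = 0 <-> x = y) /\
  (forall x y, d x y = d y x) /\
  (forall x y z, d x z <= d x y + d y z).

Definition strict_linear_on (X : Type) (S : X -> Prop) (lt : X -> X -> Prop) : Prop :=
  (forall x, S x -> ~ lt x x) /\
  (forall x y z, S x -> S y -> S z -> lt x y -> lt y z -> lt x z) /\
  (forall x y, S x -> S y -> x <> y -> lt x y \/ lt y x).

(* Partial maps X -> X are functions X -> option X; dom f = {x | f x <> None}.
   On a finite type the domain is automatically finite. *)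
Definition pdom (X : Type) (f : X -> option X) (x : X) : Prop := exists y, f x = Some y.

Definition partial_isometry_on (X : Type) (d : X -> X -> R) (S : X -> Prop)
    (f : X -> option X) : Prop :=
  (forall x y, f x = Some y -> S x /\ S y) /\
  (forall x y x' y', f x = Some x' -> f y = Some y' -> d x' y' = d x y).

Definition order_preserving (X : Type) (lt : X -> X -> Prop) (f : X -> option X) : Prop :=
  forall x y x' y', f x = Some x' -> f y = Some y' -> lt x y -> lt x' y'.

Fixpoint piter (X : Type) (f : X -> option X) (n : nat) (x : X) : option X :=
  match n with
  | O => Some x
  | S m => match piter f m x with Some y => f y | None => None end
  end.

Definition Fix (X : Type) (f : X -> option X) (x : X) : Prop := f x = Some x.

Definition Per (X : Type) (f : X -> option X) (x : X) : Prop :=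
  pdom f x /\ exists n, (0 < n)%nat /\ piter f n x = Some x.

(* Main.v *)
Require Import Defs.
From mathcomp Require Import all_boot.
From Stdlib Require Import Reals Classical.

Lemma piter_S' (X : Type) (f : X -> option X) n z :
  piter f (S n) z = match f z with Some y => piter f n y | None => None end.
Proof.
elim: n z => [|n IH] z; first by simpl; case: (f z).
change (piter f (S (S n)) z) with (match piter f (S n) z with Some y => f y | None => None end).
rewrite IH. case: (f z) => //= y.
Qed.

Section Good.
Variables (B : finType) (q : B -> option B).
Hypothesis qinj : forall x y z, q x = Some z -> q y = Some z -> x = y.
Hypothesis perfix : forall x, Per q x -> Fix q x.

Lemma exists_good (A : {set B}) (b0 : B) : b0 \notin A ->
  exists b, b \notin A /\ forall x, q x = Some b -> x \in A \/ x = b.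
Proof.
move=> b0A.
apply: NNPP => Hn.
have H : forall b, b \notin A -> exists x, q x = Some b /\ x \notin A /\ x <> b.
  move=> b bA; apply: NNPP => Hb; apply: Hn; exists b; split => // x qx.
  case: (boolP (x \in A)) => xA; first by left.
  case: (classic (x = b)) => xb; first by right.
  by exfalso; apply: Hb; exists x.
pose g b := if b \in A then b else
  match [pick x | (q x == Some b) && (x \notin A) && (x != b)] with Some x => x | None => b end.
have gP : forall b, b \notin A -> [/\ q (g b) = Some b, g b \notin A & g b != b].
  move=> b bA; rewrite /g (negbTE bA).
  case: pickP => [x /andP [/andP [/eqP -> ->] ->] //|none].
  have [x [qx [xA xb]]] := H b bA.
  have := none x; rewrite qx eqxx xA /=.
  by move/eqP: xb => /negbTE ->.
have ginj : injective g.
  move=> x y.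
  case: (boolP (x \in A)) => xA; case: (boolP (y \in A)) => yA.
  - by rewrite /g xA yA.
  - have [_ gy _] := gP y yA. rewrite {1}/g xA => E. by rewrite E (negbTE gy) in xA.
  - have [_ gx _] := gP x xA. rewrite {2}/g yA => E. by rewrite -E (negbTE gx) in yA.
  - have [qx _ _] := gP x xA; have [qy _ _] := gP y yA.
    move=> E; rewrite E qy in qx. by case: qx.
have notA : forall k, iter k g b0 \notin A.
  elim => [|k IH] //=. by have [] := gP _ IH.
have Hpit : forall k, piter q k (iter k g b0) = Some b0.
  elim => [|k IH] //. rewrite piter_S' iterS.
  by have [-> _ _] := gP _ (notA k).
have Ho := iter_order ginj b0.
have Hp := Hpit (order g b0). rewrite Ho in Hp.
have Hpos := order_gt0 g b0.
have Hper : Per q b0.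
  split; last by exists (order g b0); split => //; apply/ssrnat.ltP.
  move: Hp; rewrite -(orderSpred g b0) piter_S'.
  rewrite /pdom; case: (q b0) => [y _|//]; by exists y.
have Hf := perfix _ Hper. rewrite /Fix in Hf.
have [qg _ gb] := gP b0 b0A.
have := qinj _ _ _ qg Hf. by move/eqP: gb.
Qed.

Definition Concl (A : {set B}) (ltA : B -> B -> Prop) :=
  exists lt : B -> B -> Prop,
    strict_linear_on (fun _ => True) lt /\
    (forall x y, x \in A -> y \in A -> (lt x y <-> ltA x y)) /\
    order_preserving lt q.

Definition Hyps (A : {set B}) (ltA : B -> B -> Prop) (p : B -> option B) :=
  [/\ strict_linear_on (fun x => x \in A) ltA,
      (forall x y, p x = Some y -> x \in A /\ y \in A),
      order_preserving ltA p,
      (forall x y, p x = Some y -> q x = Some y) &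
      (forall x y, q x = Some y -> (y \in A <-> pdom p x))].

Lemma base_case (A : {set B}) ltA p : (forall x, x \in A) -> Hyps A ltA p -> Concl A ltA.
Proof.
move=> all [[H1a [H1b H1c]] H2 H3 H4 H5].
exists ltA; split; [|split].
- split; [|split].
  + by move=> x _; apply: H1a.
  + by move=> x y z _ _ _; apply: H1b.
  + by move=> x y _ _; apply: H1c.
- by [].
- move=> x y x' y' qx qy lxy.
  have [z pz] := (H5 _ _ qx).1 (all _).
  have [w pw] := (H5 _ _ qy).1 (all _).
  have := H4 _ _ pz; rewrite qx => -[E1]; subst z.
  have := H4 _ _ pw; rewrite qy => -[E2]; subst w.
  exact: H3 pz pw lxy.
Qed.

Definition ins (A : {set B}) (ltA : B -> B -> Prop) (b : B) (P : B -> Prop) x y :=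
  (x \in A /\ y \in A /\ ltA x y) \/ (x = b /\ y \in A /\ P y) \/
  (x \in A /\ y = b /\ ~ P x).

Lemma ins_linear (A : {set B}) ltA b P :
  b \notin A -> strict_linear_on (fun x => x \in A) ltA ->
  (forall y z, y \in A -> z \in A -> P y -> ltA y z -> P z) ->
  strict_linear_on (fun x => x \in b |: A) (ins A ltA b P) /\
  (forall x y, x \in A -> y \in A -> (ins A ltA b P x y <-> ltA x y)).
Proof.
move=> bA [Hirr [Htr Htot]] Pup.
have nb : forall x, x \in A -> x <> b by move=> x xA E; subst x; rewrite xA in bA.
split; [split; [|split]|].
- move=> x _ [[xA [_ H]]|[[E [xA _]]|[xA [E _]]]].
  + exact: Hirr H.
  + subst x; by rewrite xA in bA.
  + subst x; by rewrite xA in bA.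
- move=> x y z _ _ _ Hxy Hyz.
  case: Hxy => [[xA [yA lxy]]|[[Ex [yA Py]]|[xA [Ey nPx]]]];
  case: Hyz => [[yA' [zA lyz]]|[[Ey' [zA Pz]]|[yA' [Ez nPy]]]];
  try subst x; try subst y; try subst z.
  + left; split => //; split => //; exact: Htr lxy lyz.
  + by exfalso; apply: (nb b yA).
  + right; right; split => //; split => // Px; apply: nPy; exact: Pup Px lxy.
  + right; left; split => //; split => //; exact: Pup Py lyz.
  + by exfalso; apply: (nb b yA).
  + by exfalso; apply: nPy.
  + by exfalso; apply: (nb b yA').
  + left; split => //; split => //.
    case: (classic (x = z)) => [E|nxz]; first by subst z.
    case: (Htot x z xA zA nxz) => // lzx.
    by exfalso; apply: nPx; exact: Pup Pz lzx.
  + by exfalso; apply: (nb b yA').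
- move=> x y; rewrite !in_setU1 => /orP [/eqP Ex|xA] /orP [/eqP Ey|yA] nxy; rewrite /ins.
  + by exfalso; apply: nxy; subst.
  + subst x; case: (classic (P y)) => Py.
    * by left; right; left.
    * by right; right; right.
  + subst y; case: (classic (P x)) => Px.
    * by right; right; left.
    * by left; right; right.
  + case: (Htot x y xA yA nxy) => H; [left|right]; by left.
- move=> x y xA yA; rewrite /ins; split.
  + case => [[_ [_ H]]//|[[E _]|[_ [E _]]]].
    * by exfalso; apply: (nb x xA).
    * by exfalso; apply: (nb y yA).
  + by move=> H; left.
Qed.

Lemma step_gen (A : {set B}) ltA p b P :
  Hyps A ltA p -> b \notin A -> (forall x, q x = Some b -> x \in A \/ x = b) ->
  (forall y z, y \in A -> z \in A -> P y -> ltA y z -> P z) ->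
  (forall x y y', q x = Some b -> p y = Some y' -> ins A ltA b P x y -> P y') ->
  (forall x x' y, p x = Some x' -> q y = Some b -> ins A ltA b P x y -> ~ P x') ->
  Hyps (b |: A) (ins A ltA b P) (fun x => if q x == Some b then Some b else p x).
Proof.
move=> [H1 H2 H3 H4 H5] bA good Pup C1 C2.
have [[Iirr [Itr Itot]] Iag] := @ins_linear A ltA b P bA H1 Pup.
split => //.
- move=> x y; case: eqP => [qx [<-]|_ /H2 [xA yA]].
  + rewrite !in_setU1 eqxx /=; split => //.
    by case: (good x qx) => [->|->]; rewrite ?orbT ?eqxx.
  + by rewrite !in_setU1 xA yA !orbT.
- move=> x y x' y' Ex Ey Hxy.
  move: Ex Ey; case: (q x =P Some b) => [qx|nqx]; case: (q y =P Some b) => [qy|nqy] => Ex Ey;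
  try (injection Ex as Ex; subst x'); try (injection Ey as Ey; subst y').
  + exfalso.
    have E := qinj _ _ _ qx qy; subst y.
    apply: (Iirr x) Hxy.
    by rewrite in_setU1; case: (good x qx) => [->|->]; rewrite ?orbT ?eqxx.
  + move: Ey => py; right; left; split => //; split; last exact: C1 qx py Hxy.
    by case: (H2 _ _ py).
  + move: Ex => px; right; right; split; first by case: (H2 _ _ px).
    split => //; exact: C2 px qy Hxy.
  + move: Ex Ey => px py.
    have [xA x'A] := H2 _ _ px; have [yA y'A] := H2 _ _ py.
    apply/Iag => //; apply: H3 px py _; exact/Iag.
- move=> x y; case: eqP => [-> //|_]; exact: H4.
- move=> x y qxy; rewrite in_setU1; split.
  + case/orP => [/eqP E|yA].
    * subst y; rewrite /pdom qxy eqxx; by exists b.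
    * rewrite /pdom; case: eqP => [_|_]; first by exists b.
      exact: (H5 _ _ qxy).1.
  + move=> [z]; case: eqP => [qx _|nqx pz].
    * rewrite qx in qxy; case: qxy => ->; by rewrite eqxx.
    * by rewrite (H5 _ _ qxy).2 ?orbT //; exists z.
Qed.

Lemma step (A : {set B}) ltA p b :
  Hyps A ltA p -> b \notin A -> (forall x, q x = Some b -> x \in A \/ x = b) ->
  exists ltA' p', Hyps (b |: A) ltA' p' /\
    (forall x y, x \in A -> y \in A -> (ltA' x y <-> ltA x y)).
Proof.
move=> HH bA good.
have HH' := HH; case: HH' => [[Hirr [Htr Htot]] H2 H3 H4 H5].
have nb : forall x, x \in A -> x <> b by move=> x xA E; subst x; rewrite xA in bA.
case: (classic (exists a, a \in A /\ q a = Some b)) => [[a [aA qa]]|none].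
- pose P y := exists x, ltA a x /\ exists z, p x = Some z /\ (z = y \/ ltA z y).
  have Pup : forall y z, y \in A -> z \in A -> P y -> ltA y z -> P z.
    move=> y z yA zA [x [ax [z0 [pz0 H]]]] lyz.
    exists x; split => //; exists z0; split => //; right.
    have [_ z0A] := H2 _ _ pz0.
    case: H => [E|lz0y]; first by subst z0.
    exact: Htr lz0y lyz.
  have [_ Iag] := @ins_linear A ltA b P bA (conj Hirr (conj Htr Htot)) Pup.
  exists (ins A ltA b P), (fun x => if q x == Some b then Some b else p x).
  split => //.
  apply: step_gen => //.
  + move=> x y y' qx py Hxy.
    have E := qinj _ _ _ qx qa; subst x.
    have [yA y'A] := H2 _ _ py.
    have lay : ltA a y by apply/Iag.
    by exists y; split => //; exists y'; split => //; left.
  + move=> x x' y px qy Hxy [x1 [ax1 [z [pz H]]]].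
    have E := qinj _ _ _ qy qa; subst y.
    have [xA x'A] := H2 _ _ px; have [x1A zA] := H2 _ _ pz.
    have lxa : ltA x a by apply/Iag.
    have lxx1 := Htr _ _ _ xA aA x1A lxa ax1.
    have lx'z := H3 _ _ _ _ px pz lxx1.
    case: H => [E|lzx'].
    * subst z; exact: Hirr x'A lx'z.
    * exact: Hirr x'A (Htr _ _ _ x'A zA x'A lx'z lzx').
- pose P (y : B) := True.
  have Pup : forall y z, y \in A -> z \in A -> P y -> ltA y z -> P z by [].
  have [_ Iag] := @ins_linear A ltA b P bA (conj Hirr (conj Htr Htot)) Pup.
  exists (ins A ltA b P), (fun x => if q x == Some b then Some b else p x).
  split => //.
  apply: step_gen => //.
  move=> x x' y px qy Hxy.
  case: (good y qy) => [yA|E]; first by exfalso; apply: none; exists y.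
  subst y; exfalso.
  case: Hxy => [[_ [H _]]|[[_ [H _]]|[_ [_ H]]]].
  + by rewrite H in bA.
  + by rewrite H in bA.
  + by apply: H.
Qed.
End Good.

Lemma ind_main (B : finType) (q : B -> option B)
  (qinj : forall x y z, q x = Some z -> q y = Some z -> x = y)
  (perfix : forall x, Per q x -> Fix q x) :
  forall k (A : {set B}) ltA p, leq (subn #|B| #|A|) k ->
  @Hyps B q A ltA p -> @Concl B q A ltA.
Proof.
elim => [|k IH] A ltA p Hk HH.
all: case: (classic (exists b, b \notin A)) => [[b0 b0A]|none];
  [| apply: (@base_case B q A ltA p) => // x; apply: negbNE; apply/negP => xA; apply: none; by exists x].
all: have [b [bA good]] := @exists_good B q qinj perfix A b0 b0A.
all: have Hc : #|b |: A| = (#|A|).+1 by rewrite cardsU1 bA.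
all: have Hle : leq (#|b |: A|) #|B| by apply: max_card.
- exfalso. rewrite Hc in Hle.
  move: Hk; rewrite leqn0 subn_eq0 => Hk.
  have := leq_trans Hle Hk. by rewrite ltnn.
- have [ltA' [p' [HH' Hag]]] := @step B q qinj A ltA p b HH bA good.
  have Hk' : leq (subn #|B| #|b |: A|) k.
    rewrite Hc subnS. move: Hk. case: (subn #|B| #|A|) => //.
  have [lt [Hl [Hagr Hop]]] := IH _ _ _ Hk' HH'.
  exists lt; split => //; split => // x y xA yA.
  rewrite -Hag //. apply: Hagr; by rewrite in_setU1 ?xA ?yA orbT.
Qed.

Theorem proposition4p6 (B : finType) (d : B -> B -> R) (A : {set B})
    (ltA : B -> B -> Prop) (p q : B -> option B) :
  is_metric d ->
  strict_linear_on (fun x => x \in A) ltA ->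
  (* p is a partial isomorphism of the ordered metric space (A, d|A, ltA) *)
  partial_isometry_on d (fun x => x \in A) p ->
  order_preserving ltA p ->
  (* q is a partial isometry of B extending p *)
  partial_isometry_on d (fun _ => True) q ->
  (forall x y, p x = Some y -> q x = Some y) ->
  (forall x, Per q x <-> Fix q x) ->
  (forall x y, q x = Some y -> (y \in A <-> pdom p x)) ->
  exists lt : B -> B -> Prop,
    strict_linear_on (fun _ => True) lt /\
    (forall x y, x \in A -> y \in A -> (lt x y <-> ltA x y)) /\
    order_preserving lt q.
Proof.
move=> [_ [Hd0 _]] HA [Hp1 _] Hop [_ Hq2] Hpq HPF Hqa.
have qinj : forall x y z, q x = Some z -> q y = Some z -> x = y.
  move=> x y z qx qy; apply/Hd0; rewrite -(Hq2 _ _ _ _ qx qy); exact/Hd0.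
have perfix : forall x, Per q x -> Fix q x by move=> x; apply: (proj1 (HPF x)).
have := @ind_main B q qinj perfix (subn #|B| #|A|) A ltA p (leqnn _).
by apply; split.
Qed.
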